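(* Let $n,r\ge1$, $A_{-1}\in\mathbb{R}^{n\times n}$, $B\in\mathbb{R}^{n\times r}$, and let $A_2,A_3$ be $n\times n$ matrix functions on $[-1,0]$ with entries in $L_2([-1,0],\mathbb{C})$. For a matrix $M\in\mathbb{C}^{n\times n}$ define $$\Delta_M(\lambda)=\lambda I-\lambda e^{-\lambda}M-\lambda\int_{-1}^0e^{\lambda s}A_2(s)\,ds-\int_{-1}^0e^{\lambda s}A_3(s)\,ds,\quad\lambda\in\mathbb{C}.$$ Say that a pair $(M,B)$ satisfies conditions (i) and (ii) if: (i) $\operatorname{rank}(\Delta_M(\lambda)\ \ B)=n$ for every $\lambda\in\mathbb{C}$ (equivalently, there are no $\lambda\in\mathbb{C}$ and $y\in\mathbb{C}^n\setminus\{0\}$ with $\Delta_M(\lambda)^*y=0$ and $B^*y=0$); (ii) $\operatorname{rank}(B\ \ MB\ \cdots\ M^{n-1}B)=n$. If $(A_{-1},B)$ satisfies conditions (i) and (ii), then for every matrix $P\in\mathbb{C}^{r\times n}$ the pair $(A_{-1}+BP,B)$ satisfies conditions (i) and (ii) (with the same $A_2,A_3$). *)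

(* Defs.v *)
From HB Require Import structures.
From mathcomp Require Import all_boot all_order all_algebra.
From mathcomp Require Import all_classical all_reals.
From mathcomp Require Import topology normedtype sequences exp trigo measure
  lebesgue_measure lebesgue_integral.
From mathcomp Require Import complex.

Set Implicit Arguments.
Unset Strict Implicit.
Unset Printing Implicit Defensive.

Import Order.TTheory GRing.Theory Num.Theory.
Local Open Scope ring_scope.
Local Open Scope complex_scope.

Section Defs.
Variable R : realType.
Local Notation C := R[i].

Definition cexp (z : C) : C :=
  let: a +i* b := z in (expR a * cos b) +i* (expR a * sin b).

Definition reC (z : C) : R := let: a +i* _ := z in a.
Definition imC (z : C) : R := let: _ +i* b := z in b.

Definition Im10 : set R := `[(-1 : R), 0]%classic.

Definition cint (f : R -> C) : C :=
  (Rintegral lebesgue_measure Im10 (fun s => reC (f s)))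
  +i* (Rintegral lebesgue_measure Im10 (fun s => imC (f s))).

Definition L2c (f : R -> C) : Prop :=
  measurable_fun Im10 (fun s => reC (f s)) /\
  measurable_fun Im10 (fun s => imC (f s)) /\
  (\int[lebesgue_measure]_(s in Im10)
      ((reC (f s)) ^+ 2 + (imC (f s)) ^+ 2)%:E < +oo)%E.

Definition L2mx n (A : R -> 'M[C]_n) : Prop :=
  forall i j : 'I_n, L2c (fun s => A s i j).

Definition int_exp_mx n (lam : C) (A : R -> 'M[C]_n) : 'M[C]_n :=
  \matrix_(i, j) cint (fun s => cexp (lam * s%:C) * A s i j).

Definition Delta n (A2 A3 : R -> 'M[C]_n) (M : 'M[C]_n) (lam : C) : 'M[C]_n :=
  lam *: 1%:M - (lam * cexp (- lam)) *: M - lam *: int_exp_mx lam A2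
  - int_exp_mx lam A3.

Definition ctrl_mx n r (M : 'M[C]_n) (B : 'M[C]_(n, r)) :=
  \mxrow_(k < n) (M ^+ k *m B).

Definition cond_i n r (A2 A3 : R -> 'M[C]_n) (M : 'M[C]_n) (B : 'M[C]_(n, r))
  : Prop := forall lam : C, \rank (row_mx (Delta A2 A3 M lam) B) = n.

Definition cond_ii n r (M : 'M[C]_n) (B : 'M[C]_(n, r)) : Prop :=
  \rank (ctrl_mx M B) = n.

Definition cmx m n (A : 'M[R]_(m, n)) : 'M[C]_(m, n) := map_mx (fun x => x%:C) A.

End Defs.

(* Main.v *)
Require Import Defs.
From HB Require Import structures.
From mathcomp Require Import all_boot all_order all_algebra.
From mathcomp Require Import all_classical all_reals.
From mathcomp Require Import complex.

Import Order.TTheory GRing.Theory Num.Theory.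
Local Open Scope ring_scope.
Local Open Scope complex_scope.

Lemma rank_transfer (F : fieldType) n m m' (A : 'M[F]_(n, m)) (A' : 'M[F]_(n, m')) :
  (forall p (y : 'M[F]_(p, n)), y *m A' = 0 -> y *m A = 0) ->
  \rank A = n -> \rank A' = n.
Proof.
move=> H rA.
have := H _ _ (mulmx_ker A') => /sub_kermxP /mxrankS.
rewrite !mxrank_ker rA subnn leqn0 subn_eq0 => h.
by apply/eqP; rewrite eqn_leq h rank_leq_row.
Qed.

Theorem lemma2 (R : realType) (n r : nat) (hn : (1 <= n)%N) (hr : (1 <= r)%N)
  (Am1 : 'M[R]_n) (B : 'M[R]_(n, r)) (A2 A3 : R -> 'M[R[i]]_n)
  (hA2 : L2mx A2) (hA3 : L2mx A3) :
  cond_i A2 A3 (cmx Am1) (cmx B) -> cond_ii (cmx Am1) (cmx B) ->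
  forall P : 'M[R[i]]_(r, n),
    cond_i A2 A3 (cmx Am1 + cmx B *m P) (cmx B) /\
    cond_ii (cmx Am1 + cmx B *m P) (cmx B).
Proof.
move=> Hi Hii P.
set M := cmx Am1; set Bc := cmx B; set M' := M + Bc *m P.
split.
  move=> lam; apply: rank_transfer (Hi lam) => p y.
  have eD : Delta A2 A3 M' lam = Delta A2 A3 M lam - (lam * cexp (- lam)) *: (Bc *m P).
    rewrite /Delta /M' scalerDr opprD !addrA.
    by rewrite [_ - _ *: (Bc *m P) - _]addrAC [_ - _ *: (Bc *m P) - _]addrAC.
  rewrite !mul_mx_row eD => /eqP; rewrite row_mx_eq0 => /andP[/eqP h1 /eqP h2].
  apply/eqP; rewrite row_mx_eq0 h2 eqxx andbT.
  move: h1; rewrite mulmxBr -scalemxAr mulmxA h2 mul0mx scaler0 subr0 => ->.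
  by [].
apply: rank_transfer Hii => p y.
rewrite /ctrl_mx !mul_mxrow => h.
have hk : forall k : 'I_n, y *m (M' ^+ k *m Bc) = 0.
  by move=> k; have := congr1 (fun X => submxrow X k) h; rewrite mxrowK submxrow0.
have eq : forall k, (k <= n)%N -> y *m M' ^+ k = y *m M ^+ k.
  elim=> [|k IH] kn; first by rewrite !expr0.
  rewrite !exprSr !mulmxA IH ?(ltnW kn) // /M' mulmxDr mulmxA.
  have := hk (Ordinal kn); rewrite /= mulmxA -IH ?(ltnW kn) // => ->.
  by rewrite mul0mx addr0.
apply/mxrowP => j; rewrite mxrowK submxrow0.
rewrite mulmxA -eq ?(ltnW (ltn_ord j)) // -mulmxA.
exact: hk.
Qed.
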